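(* Let $F(d)=1/d^2$ and let $(x_n)_{n\in\mathbb Z}$ be a uniformly discrete equilibrium configuration for $F$ having a periodic tail, i.e. there exist $N\in\mathbb Z$, an integer $k\ge1$ and a real $t>0$ such that $x_{n+k}=x_n+t$ for all $n\ge N$ (or for all $n\le N$). Then the configuration is trivial, i.e. $x_{n+1}-x_n$ is constant.
   Context: A configuration is a strictly increasing bi-infinite sequence $(x_n)_{n\in\mathbb Z}$ of reals; it is uniformly discrete if there are constants $0<c\le C<\infty$ with $c\le x_n-x_{n-1}\le C$ for all $n$. The particle at $x_n$ is in equilibrium if $\sum_{m<n}F(x_n-x_m)$ and $\sum_{m>n}F(x_m-x_n)$ are both finite and equal; an equilibrium configuration is one in which every particle is in equilibrium. It is trivial if it is an arithmetic progression. *)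

(* Defs.v *)
From Stdlib Require Export Reals Lra Lia ZArith.
Open Scope R_scope.

Definition configuration (x : Z -> R) : Prop :=
  forall n : Z, x (n - 1)%Z < x n.

Definition uniformly_discrete (x : Z -> R) : Prop :=
  exists c C : R, 0 < c /\ c <= C /\
    forall n : Z, c <= x n - x (n - 1)%Z <= C.

(* sum_{m<n} F(x_n - x_m), enumerated as m = n - (j+1), j = 0,1,2,... *)
Definition left_force (F : R -> R) (x : Z -> R) (n : Z) (j : nat) : R :=
  F (x n - x (n - Z.of_nat (S j))%Z).

(* sum_{m>n} F(x_m - x_n), enumerated as m = n + (j+1). *)
Definition right_force (F : R -> R) (x : Z -> R) (n : Z) (j : nat) : R :=
  F (x (n + Z.of_nat (S j))%Z - x n).

(* Both series are finite (converge) and have equal sums.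
   (Terms are positive for F = 1/d^2, so the enumeration order is irrelevant.) *)
Definition in_equilibrium (F : R -> R) (x : Z -> R) (n : Z) : Prop :=
  exists L : R, infinite_sum (left_force F x n) L /\
                infinite_sum (right_force F x n) L.

Definition equilibrium_configuration (F : R -> R) (x : Z -> R) : Prop :=
  configuration x /\ forall n : Z, in_equilibrium F x n.

Definition trivial_configuration (x : Z -> R) : Prop :=
  exists d : R, forall n : Z, x (n + 1)%Z - x n = d.

Definition inverse_square (d : R) : R := 1 / d ^ 2.

(* Main.v *)
Require Import Defs.
From Stdlib Require Import Reals ZArith.
From Stdlib Require Import Lra Lia.
From Stdlib Require FunctionalExtensionality.
Open Scope R_scope.

Lemma isum_cv s l : infinite_sum s l -> Un_cv (sum_f_R0 s) l.
Proof. auto. Qed.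
Lemma cv_isum s l : Un_cv (sum_f_R0 s) l -> infinite_sum s l.
Proof. auto. Qed.

Lemma isum_minus f g A B : infinite_sum f A -> infinite_sum g B ->
  infinite_sum (fun i => f i - g i) (A - B).
Proof.
  intros Hf Hg. apply cv_isum.
  assert (H := CV_minus _ _ _ _ (isum_cv _ _ Hf) (isum_cv _ _ Hg)).
  intros e He. destruct (H e He) as [N HN]. exists N. intros n Hn.
  rewrite minus_sum. apply HN; auto.
Qed.

Lemma isum_scal f A c : infinite_sum f A -> infinite_sum (fun i => f i * c) (A * c).
Proof.
  intros Hf. apply cv_isum.
  assert (Hc : Un_cv (fun _ => c) c).
  { intros e He. exists 0%nat. intros. unfold Rdist. rewrite Rminus_diag, Rabs_R0. lra. }
  assert (H := CV_mult _ _ _ _ (isum_cv _ _ Hf) Hc).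
  intros e He. destruct (H e He) as [N HN]. exists N. intros n Hn.
  rewrite <- scal_sum, Rmult_comm. apply HN; auto.
Qed.

Lemma isum_le f g A B : (forall i, f i <= g i) -> infinite_sum f A -> infinite_sum g B -> A <= B.
Proof.
  intros H Hf Hg. refine (Rle_cv_lim _ Hf Hg).
  intros n. apply sum_Rle. intros; auto.
Qed.

Lemma isum_ub f A B : (forall n, sum_f_R0 f n <= B) -> infinite_sum f A -> A <= B.
Proof.
  intros H Hf. destruct (Rle_or_lt A B) as [h|h]; auto.
  destruct (Hf (A - B)) as [N HN]; [lra|].
  specialize (HN N (le_n N)). specialize (H N). unfold Rdist in HN.
  apply Rabs_def2 in HN. lra.
Qed.

Lemma isum_lb f A : (forall i, 0 <= f i) -> infinite_sum f A -> forall n, sum_f_R0 f n <= A.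
Proof.
  intros H Hf. apply growing_ineq; auto.
  intros n. simpl. specialize (H (S n)). lra.
Qed.

Lemma sum_S f n : sum_f_R0 f (S n) = f 0%nat + sum_f_R0 (fun i => f (S i)) n.
Proof.
  induction n; simpl in *; [lra|]. rewrite IHn. lra.
Qed.

Lemma isum_shift1 f L : infinite_sum f L -> infinite_sum (fun m => f (S m)) (L - f 0%nat).
Proof.
  intros Hf e He. destruct (Hf e He) as [N HN]. exists N. intros n Hn.
  specialize (HN (S n) ltac:(lia)). rewrite sum_S in HN. unfold Rdist in *.
  replace (sum_f_R0 (fun m => f (S m)) n - (L - f 0%nat)) with (f 0%nat + sum_f_R0 (fun i => f (S i)) n - L) by ring.
  auto.
Qed.

Fixpoint pre (f : nat -> R) (p : nat) : R :=
  match p with O => 0 | S p => pre f p + f p end.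

Lemma isum_shift f L p : infinite_sum f L -> infinite_sum (fun i => f (p + i)%nat) (L - pre f p).
Proof.
  revert f L. induction p; intros f L Hf; simpl.
  - replace (L - 0) with L by ring. exact Hf.
  - assert (H := IHp _ _ Hf). apply isum_shift1 in H. simpl in H.
    replace (p + 0)%nat with p in H by lia.
    replace (L - (pre f p + f p)) with (L - pre f p - f p) by ring.
    eapply (fun h => eq_ind _ (fun g => infinite_sum g _) H _ h).
    apply FunctionalExtensionality.functional_extensionality. intros i. f_equal. lia.
Qed.

Lemma pre_ext f g p : (forall i, (i < p)%nat -> f i = g i) -> pre f p = pre g p.
Proof. induction p; simpl; intros; auto. rewrite IHp, H; auto. Qed.

Lemma isum_terms_eq f g L : (forall i, f i <= g i) -> infinite_sum f L -> infinite_sum g L ->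
  forall i, f i = g i.
Proof.
  intros H Hf Hg i. destruct (H i) as [h|h]; auto. exfalso.
  assert (Hd := isum_minus _ _ _ _ Hg Hf).
  assert (HL := isum_lb (fun j => g j - f j) (L - L) ltac:(intros j; specialize (H j); lra) Hd i).
  assert (Hp : forall n, 0 <= sum_f_R0 (fun j => g j - f j) n).
  { intros n. apply cond_pos_sum. intros j; specialize (H j); lra. }
  destruct i. simpl in HL. lra.
  rewrite tech5 in HL. specialize (Hp i). lra.
Qed.

Fixpoint D (r : nat) (d : R) : R :=
  match r with O => / d ^ 2 | S r => D r d - D r (d + 1) end.
Fixpoint P (r : nat) (d : R) : R :=
  match r with O => / d | S r => P r d / (d + INR (S r)) end.
Fixpoint H (r : nat) (d : R) : R :=
  match r with O => / d | S r => H r d + / (d + INR (S r)) end.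
Fixpoint Q (r : nat) (d : R) : R :=
  match r with O => 1 | S r => Q r d / (d + INR (S (S r))) end.

Lemma P_pos r d : 0 < d -> 0 < P r d.
Proof.
  intros Hd; induction r; cbn [P].
  - apply Rinv_0_lt_compat; lra.
  - apply Rdiv_lt_0_compat; auto. assert (0 <= INR (S r)) by apply pos_INR. lra.
Qed.
Lemma H_pos r d : 0 < d -> 0 < H r d.
Proof.
  intros Hd; induction r; cbn [H].
  - apply Rinv_0_lt_compat; lra.
  - assert (0 <= INR (S r)) by apply pos_INR.
    assert (0 < / (d + INR (S r))) by (apply Rinv_0_lt_compat; lra). lra.
Qed.
Lemma Q_pos r d : 0 < d -> 0 < Q r d.
Proof.
  intros Hd; induction r; cbn [Q]. lra.
  apply Rdiv_lt_0_compat; auto. assert (0 <= INR (S (S r))) by apply pos_INR. lra.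
Qed.

Lemma P_shift r d : 0 < d -> P r (d + 1) = d * P (S r) d.
Proof.
  intros Hd. induction r.
  - simpl. field. lra.
  - change (P (S r) (d + 1)) with (P r (d+1) / (d + 1 + INR (S r))).
    change (P (S (S r)) d) with (P (S r) d / (d + INR (S (S r)))).
    rewrite IHr. rewrite (S_INR (S r)).
    assert (0 <= INR (S r)) by apply pos_INR. field. lra.
Qed.

Lemma H_shift r d : 0 < d -> H r (d + 1) = H (S r) d - / d.
Proof.
  intros Hd. induction r.
  - simpl. field. lra.
  - change (H (S r) (d + 1)) with (H r (d+1) + / (d + 1 + INR (S r))).
    change (H (S (S r)) d) with (H (S r) d + / (d + INR (S (S r)))).
    rewrite IHr. rewrite (S_INR (S r)). ring_simplify.
    replace (d + 1 + INR (S r)) with (d + (INR (S r) + 1)) by ring. ring.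
Qed.

Lemma D_closed r d : 0 < d -> D r d = INR (fact r) * P r d * H r d.
Proof.
  revert d; induction r; intros d Hd.
  - simpl. field. lra.
  - cbn [D]. rewrite IHr by lra. rewrite IHr by lra.
    rewrite P_shift, H_shift by lra.
    change (P (S r) d) with (P r d / (d + INR (S r))).
    change (H (S r) d) with (H r d + / (d + INR (S r))).
    rewrite fact_simpl, mult_INR.
    assert (0 <= INR r) by apply pos_INR. rewrite S_INR. field. lra.
Qed.

Lemma D_pos r d : 0 < d -> 0 < D r d.
Proof.
  intros Hd. rewrite D_closed by auto.
  apply Rmult_lt_0_compat; [apply Rmult_lt_0_compat|]; auto using INR_fact_lt_0, P_pos, H_pos.
Qed.

Lemma P_Q r d : 0 < d -> P (S r) d * (d * (d + 1)) = Q r d.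
Proof.
  intros Hd. induction r.
  - simpl. field. lra.
  - change (P (S (S r)) d) with (P (S r) d / (d + INR (S (S r)))).
    change (Q (S r) d) with (Q r d / (d + INR (S (S r)))).
    rewrite <- IHr. assert (0 <= INR (S (S r))) by apply pos_INR. field. lra.
Qed.

Lemma Q_anti r a b : 0 < a -> a <= b -> Q r b <= Q r a.
Proof.
  intros Ha Hab. induction r; cbn [Q]. lra.
  assert (0 <= INR (S (S r))) by apply pos_INR.
  assert (0 < Q r b) by (apply Q_pos; lra).
  unfold Rdiv. apply Rmult_le_compat; try lra.
  left; apply Rinv_0_lt_compat; lra.
  apply Rinv_le_contravar; lra.
Qed.

Lemma P_anti r a b : 0 < a -> a <= b -> P r b <= P r a.
Proof.
  intros Ha Hab. induction r; cbn [P].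
  - apply Rinv_le_contravar; lra.
  - assert (0 <= INR (S r)) by apply pos_INR.
    assert (0 < P r b) by (apply P_pos; lra).
    unfold Rdiv. apply Rmult_le_compat; try lra.
    left; apply Rinv_0_lt_compat; lra.
    apply Rinv_le_contravar; lra.
Qed.

Lemma H_anti r a b : 0 < a -> a <= b -> H r b <= H r a.
Proof.
  intros Ha Hab. induction r; cbn [H].
  - apply Rinv_le_contravar; lra.
  - assert (0 <= INR (S r)) by apply pos_INR.
    assert (/ (b + INR (S r)) <= / (a + INR (S r))) by (apply Rinv_le_contravar; lra). lra.
Qed.

Lemma D_le_rho r a b : 0 < a -> a <= b -> D r b <= D r a * (P r b / P r a).
Proof.
  intros Ha Hab. rewrite !D_closed by lra.
  assert (0 < P r a) by (apply P_pos; lra). assert (0 < P r b) by (apply P_pos; lra).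
  assert (H r b <= H r a) by (apply H_anti; lra).
  assert (0 < INR (fact r)) by apply INR_fact_lt_0.
  replace (INR (fact r) * P r a * H r a * (P r b / P r a)) with (INR (fact r) * P r b * H r a) by (field; lra).
  apply Rmult_le_compat_l; [|auto]. left. apply Rmult_lt_0_compat; auto.
Qed.

Lemma D_dom r a b : 0 < a -> a <= b -> D (S r) b <= D (S r) a * ((a + 1) ^ 2 * / b ^ 2).
Proof.
  intros Ha Hab. rewrite !D_closed by lra.
  assert (E1 : P (S r) b = Q r b / (b * (b+1))) by (rewrite <- P_Q by lra; field; nra).
  assert (E2 : P (S r) a = Q r a / (a * (a+1))) by (rewrite <- P_Q by lra; field; nra).
  rewrite E1, E2.
  assert (Q r b <= Q r a) by (apply Q_anti; lra).
  assert (0 < Q r b) by (apply Q_pos; lra).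
  assert (H (S r) b <= H (S r) a) by (apply H_anti; lra).
  assert (0 < H (S r) b) by (apply H_pos; lra).
  assert (0 < INR (fact (S r))) by apply INR_fact_lt_0.
  set (f := INR (fact (S r))) in *.
  assert (Hk : a * (a + 1) / (b * (b + 1)) <= (a+1)^2 * / b^2).
  { unfold Rdiv. apply Rmult_le_compat; try nra.
    left; apply Rinv_0_lt_compat; nra. apply Rinv_le_contravar; nra. }
  apply Rle_trans with (f * (Q r a / (a * (a + 1))) * H (S r) a * (a * (a + 1) / (b * (b + 1)))).
  - replace (f * (Q r a / (a * (a + 1))) * H (S r) a * (a * (a + 1) / (b * (b + 1))))
      with (f * (Q r a / (b * (b + 1))) * H (S r) a) by (field; nra).
    assert (0 < / (b * (b+1))) by (apply Rinv_0_lt_compat; nra).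
    unfold Rdiv. apply Rmult_le_compat; try lra.
    + apply Rmult_le_pos; [lra|]. apply Rmult_le_pos; lra.
    + apply Rmult_le_compat_l; [lra|]. apply Rmult_le_compat_r; lra.
  - apply Rmult_le_compat_l; auto.
    assert (0 < Q r a / (a * (a+1))). { apply Rdiv_lt_0_compat. apply Q_pos; lra. nra. }
    assert (0 < H (S r) a) by (apply H_pos; lra). apply Rmult_le_pos; [apply Rmult_le_pos|]; lra.
Qed.

Lemma bern p h : 0 <= h -> 1 + INR p * h <= (1 + h) ^ p.
Proof.
  intros Hh. induction p.
  - simpl. lra.
  - rewrite S_INR. simpl pow. assert (0 <= INR p) by apply pos_INR.
    assert (0 <= INR p * h * h) by (apply Rmult_le_pos; [apply Rmult_le_pos|]; lra). nra.
Qed.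

Lemma bern2 p x e : 0 < x -> 0 < e -> 1 <= INR p * e -> (x / (x + e)) ^ p <= x / (x + 1).
Proof.
  intros Hx He Hp.
  assert (E : (x / (x + e)) ^ p * (1 + e / x) ^ p = 1).
  { rewrite <- Rpow_mult_distr. replace (x / (x + e) * (1 + e / x)) with 1 by (field; lra). apply pow1. }
  assert (B := bern p (e / x) ltac:(apply Rlt_le, Rdiv_lt_0_compat; lra)).
  assert (Hq : 1 + / x <= 1 + INR p * (e / x)).
  { unfold Rdiv. rewrite <- Rmult_assoc. assert (0 < / x) by (apply Rinv_0_lt_compat; lra). nra. }
  assert (0 < (x / (x + e)) ^ p) by (apply pow_lt, Rdiv_lt_0_compat; lra).
  assert (0 < / x) by (apply Rinv_0_lt_compat; lra).
  replace (x / (x + 1)) with (/ (1 + / x)) by (field; lra).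
  apply Rmult_le_reg_r with (1 + / x). lra.
  rewrite Rinv_l by lra. nra.
Qed.

Lemma rho_pow p a e : 0 < a -> 0 < e -> 1 <= INR p * e ->
  forall r, (P r (a + e) / P r a) ^ p <= a / (a + INR r + 1).
Proof.
  intros Ha He Hp r. induction r.
  - cbn [P]. replace (/ (a + e) / / a) with (a / (a + e)) by (field; lra).
    simpl INR. replace (a + 0 + 1) with (a + 1) by ring. apply bern2; auto.
  - cbn [P].
    assert (0 <= INR (S r)) by apply pos_INR.
    assert (0 < P r a) by (apply P_pos; lra). assert (0 < P r (a + e)) by (apply P_pos; lra).
    replace (P r (a + e) / (a + e + INR (S r)) / (P r a / (a + INR (S r))))
      with ((P r (a + e) / P r a) * ((a + INR (S r)) / (a + INR (S r) + e))) by (field; lra).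
    rewrite Rpow_mult_distr.
    assert (B := bern2 p (a + INR (S r)) e ltac:(lra) He Hp).
    assert (0 <= (P r (a + e) / P r a) ^ p) by (apply pow_le, Rlt_le, Rdiv_lt_0_compat; lra).
    assert (0 <= ((a + INR (S r)) / (a + INR (S r) + e)) ^ p) by (apply pow_le, Rlt_le, Rdiv_lt_0_compat; lra).
    apply Rle_trans with (a / (a + INR r + 1) * ((a + INR (S r)) / (a + INR (S r) + 1))).
    + apply Rmult_le_compat; auto.
    + rewrite S_INR. assert (0 <= INR r) by apply pos_INR. right. field. lra.
Qed.

Lemma rho_small a b eta : 0 < a -> a < b -> 0 < eta ->
  exists r0, forall r, (r0 <= r)%nat -> P r b < eta * P r a.
Proof.
  intros Ha Hab He.
  destruct (archimed_cor1 (b - a) ltac:(lra)) as [p [Hp1 Hp2]].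
  assert (Hpp : 0 < INR p) by (apply lt_0_INR; lia).
  assert (Hp : 1 <= INR p * (b - a)).
  { apply Rmult_lt_compat_l with (r := INR p) in Hp1; auto. rewrite Rinv_r in Hp1; lra. }
  assert (Hep : 0 < eta ^ p) by (apply pow_lt; lra).
  destruct (archimed_cor1 (eta ^ p / a) ltac:(apply Rdiv_lt_0_compat; lra)) as [r0 [Hr1 Hr2]].
  exists r0. intros r Hr.
  assert (Hr0 : INR r0 <= INR r) by (apply le_INR; lia).
  assert (0 < INR r0) by (apply lt_0_INR; lia).
  assert (R := rho_pow p a (b - a) Ha ltac:(lra) Hp r).
  replace (a + (b - a)) with b in R by ring.
  assert (0 < P r a) by (apply P_pos; lra). assert (0 < P r b) by (apply P_pos; lra).
  destruct (Rlt_or_le (P r b) (eta * P r a)) as [h|h]; auto. exfalso.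
  assert (h2 : eta <= P r b / P r a).
  { apply Rmult_le_reg_r with (P r a); auto. unfold Rdiv. rewrite Rmult_assoc, Rinv_l; lra. }
  assert (h3 : eta ^ p <= (P r b / P r a) ^ p) by (apply pow_incr; lra).
  assert (h4 : a / (a + INR r + 1) < eta ^ p).
  { apply Rmult_lt_reg_r with (a + INR r + 1). lra.
    unfold Rdiv. rewrite Rmult_assoc, Rinv_l by lra. rewrite Rmult_1_r.
    assert (a / eta ^ p < INR r0).
    { apply Rmult_lt_reg_r with (/ INR r0 * / (a / eta ^ p)).
      apply Rmult_lt_0_compat; apply Rinv_0_lt_compat; auto. apply Rdiv_lt_0_compat; lra.
      replace (a / eta ^ p * (/ INR r0 * / (a / eta ^ p))) with (/ INR r0) by (field; lra).
      replace (INR r0 * (/ INR r0 * / (a / eta ^ p))) with (eta ^ p / a) by (field; lra). auto. }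
    assert (a < INR r0 * eta ^ p).
    { apply Rmult_lt_reg_r with (/ eta ^ p). apply Rinv_0_lt_compat; lra.
      rewrite Rmult_assoc, Rinv_r by lra. lra. }
    nra. }
  lra.
Qed.

Definition good (al be : nat -> R) : Prop :=
  (forall m, 0 < al m) /\ (forall m, al m < al (S m)) /\
  (forall m, 0 < be m) /\ (forall m, be m < be (S m)) /\
  forall j : nat, exists S, infinite_sum (fun m => / (al m + INR j) ^ 2) S /\
                            infinite_sum (fun m => / (be m + INR j) ^ 2) S.

Lemma isum_ext f g L : (forall i, f i = g i) -> infinite_sum f L -> infinite_sum g L.
Proof.
  intros H Hf e He. destruct (Hf e He) as [N HN]. exists N. intros n Hn.
  rewrite <- (sum_eq f g n) by auto. auto.
Qed.

Lemma good_D al be : good al be -> forall r j, exists S,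
  infinite_sum (fun m => D r (al m + INR j)) S /\ infinite_sum (fun m => D r (be m + INR j)) S.
Proof.
  intros (_ & _ & _ & _ & Hs) r. induction r; intros j.
  - destruct (Hs j) as [S [H1 H2]]. exists S; split; auto.
  - destruct (IHr j) as [S1 [A1 B1]]. destruct (IHr (S j)) as [S2 [A2 B2]].
    exists (S1 - S2). split.
    + eapply isum_ext; [|apply (isum_minus _ _ _ _ A1 A2)].
      intros i. cbn [D]. rewrite S_INR. f_equal. f_equal. ring.
    + eapply isum_ext; [|apply (isum_minus _ _ _ _ B1 B2)].
      intros i. cbn [D]. rewrite S_INR. f_equal. f_equal. ring.
Qed.

Lemma mono_ge (al : nat -> R) : (forall m, al m < al (S m)) -> forall m n, (m <= n)%nat -> al m <= al n.
Proof.
  intros H m n Hmn. induction Hmn. lra. specialize (H m0). lra.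
Qed.

Lemma split_sum g B eta M : (forall i, 0 <= g i) -> infinite_sum g B -> 0 <= eta ->
  forall n, sum_f_R0 (fun m => if Nat.leb m M then eta else g m) n <= INR (S M) * eta + (B - sum_f_R0 g M).
Proof.
  intros Hg HB He.
  assert (E : forall n, sum_f_R0 (fun m => if Nat.leb m M then eta else g m) n =
     if Nat.leb n M then INR (S n) * eta else INR (S M) * eta + (sum_f_R0 g n - sum_f_R0 g M)).
  { induction n.
    - simpl. destruct (Nat.leb 0 M); simpl; lra.
    - rewrite tech5, IHn.
      destruct (Nat.leb_spec (S n) M); destruct (Nat.leb_spec n M); try lia.
      + rewrite (S_INR (S n)). lra.
      + assert (n = M) by lia. subst. rewrite tech5. lra.
      + rewrite tech5. lra. }
  intros n. rewrite E. assert (HL := isum_lb g B Hg HB).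
  destruct (Nat.leb_spec n M).
  - assert (INR (S n) <= INR (S M)) by (apply le_INR; lia).
    specialize (HL M). nra.
  - specialize (HL n). lra.
Qed.

Lemma core0 al be : good al be -> al 0%nat < be 0%nat -> False.
Proof.
  intros G Hab. pose proof G as (Ha & Ham & Hb & Hbm & Hs).
  set (a := al 0%nat). set (b0 := be 0%nat). change (a < b0) in Hab.
  assert (Ha0 : 0 < a) by apply Ha.
  destruct (Hs 0%nat) as [S0 [_ HS0]].
  set (g := fun m => / (be m) ^ 2).
  assert (Hg : infinite_sum g S0).
  { eapply isum_ext; [|exact HS0]. intros i. unfold g. simpl INR. rewrite Rplus_0_r. auto. }
  assert (Hgp : forall i, 0 <= g i).
  { intros i. unfold g. left. apply Rinv_0_lt_compat. specialize (Hb i). apply pow_lt. lra. }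
  set (dl := / (3 * (a + 1) ^ 2)).
  assert (Hdl : 0 < dl) by (apply Rinv_0_lt_compat; nra).
  destruct (Hg dl Hdl) as [M HM]. specialize (HM M (le_n M)).
  unfold Rdist in HM. apply Rabs_def2 in HM.
  set (eta := / (3 * INR (S M))).
  assert (HSM : 0 < INR (S M)) by (apply lt_0_INR; lia).
  assert (Heta : 0 < eta) by (apply Rinv_0_lt_compat; lra).
  destruct (rho_small a b0 eta Ha0 Hab Heta) as [r0 Hr0].
  set (r := S r0).
  destruct (good_D al be G r 0%nat) as [Sr [HA HB]].
  assert (HA' : infinite_sum (fun m => D r (al m)) Sr).
  { eapply isum_ext; [|exact HA]. intros i. cbv beta. change (INR 0) with 0. rewrite Rplus_0_r. auto. }
  assert (HB' : infinite_sum (fun m => D r (be m)) Sr).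
  { eapply isum_ext; [|exact HB]. intros i. cbv beta. change (INR 0) with 0. rewrite Rplus_0_r. auto. }
  assert (Low : D r a <= Sr).
  { assert (L := isum_lb _ _ (fun i => Rlt_le _ _ (D_pos r (al i) (Ha i))) HA' 0%nat).
    simpl in L. exact L. }
  assert (HDa : 0 < D r a) by (apply D_pos; auto).
  set (g' := fun m => g m * (a + 1) ^ 2).
  assert (Hg' : infinite_sum g' (S0 * (a + 1) ^ 2)) by (apply isum_scal; auto).
  assert (Hg'p : forall i, 0 <= g' i).
  { intros i. unfold g'. apply Rmult_le_pos; auto. apply pow_le; lra. }
  assert (Term : forall m, D r (be m) <= (if Nat.leb m M then eta else g' m) * D r a).
  { intros m. assert (Hbm0 : b0 <= be m) by (apply mono_ge; auto; lia).
    destruct (Nat.leb m M); cbv iota.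
    - assert (T1 := D_le_rho r a (be m) Ha0 ltac:(lra)).
      assert (T2 := P_anti r b0 (be m) ltac:(lra) Hbm0).
      assert (T3 := Hr0 r ltac:(unfold r; lia)).
      assert (0 < P r a) by (apply P_pos; lra).
      assert (P r (be m) / P r a <= eta).
      { apply Rmult_le_reg_r with (P r a); auto. unfold Rdiv. rewrite Rmult_assoc, Rinv_l; lra. }
      apply Rle_trans with (D r a * (P r (be m) / P r a)); auto.
      rewrite (Rmult_comm eta). apply Rmult_le_compat_l; lra.
    - assert (T := D_dom r0 a (be m) Ha0 ltac:(lra)). fold r in T.
      unfold g', g. rewrite Rmult_comm. lra. }
  assert (Up : Sr <= D r a * (INR (S M) * eta + (S0 * (a + 1) ^ 2 - sum_f_R0 g' M))).
  { apply (isum_ub (fun m => D r (be m))); auto.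
    intros n. apply Rle_trans with (sum_f_R0 (fun m => (if Nat.leb m M then eta else g' m) * D r a) n).
    - apply sum_Rle. intros; auto.
    - rewrite <- scal_sum. apply Rmult_le_compat_l; [lra|]. apply split_sum; auto; lra. }
  assert (E1 : INR (S M) * eta = / 3) by (unfold eta; field; lra).
  assert (E2 : sum_f_R0 g' M = sum_f_R0 g M * (a + 1) ^ 2) by (unfold g'; rewrite <- scal_sum; ring).
  assert (E3 : (S0 - sum_f_R0 g M) * (a + 1) ^ 2 < / 3).
  { assert (0 < (a+1)^2) by nra.
    apply Rlt_le_trans with (dl * (a + 1) ^ 2). apply Rmult_lt_compat_r; lra.
    unfold dl. right. field. lra. }
  rewrite E1, E2 in Up.
  assert (D r a * (/ 3 + (S0 * (a + 1) ^ 2 - sum_f_R0 g M * (a + 1) ^ 2)) < D r a) by nra.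
  lra.
Qed.

Lemma core al be : good al be -> forall m, al m = be m.
Proof.
  intros G m. revert al be G. induction m; intros al be G.
  - destruct (Rtotal_order (al 0%nat) (be 0%nat)) as [h|[h|h]]; auto.
    + exfalso; eapply core0; eauto.
    + exfalso. apply (core0 be al); auto.
      destruct G as (A & B & C & D' & E). repeat split; auto.
      intros j; destruct (E j) as [S [h1 h2]]; exists S; auto.
  - assert (E0 : al 0%nat = be 0%nat).
    { destruct (Rtotal_order (al 0%nat) (be 0%nat)) as [h|[h|h]]; auto.
      + exfalso; eapply core0; eauto.
      + exfalso. apply (core0 be al); auto.
        destruct G as (A & B & C & D' & E). repeat split; auto.
        intros j; destruct (E j) as [S [h1 h2]]; exists S; auto. }
    apply (IHm (fun i => al (S i)) (fun i => be (S i))).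
    destruct G as (A & B & C & D' & E). repeat split; auto.
    intros j; destruct (E j) as [S [h1 h2]]. exists (S - / (al 0%nat + INR j) ^ 2). split.
    + apply (isum_shift1 _ _ h1).
    + rewrite E0. apply (isum_shift1 _ _ h2).
Qed.

Lemma isq d : inverse_square d = / d ^ 2.
Proof. unfold inverse_square, Rdiv. ring. Qed.

Lemma config_lt x : configuration x -> forall m n, (m < n)%Z -> x m < x n.
Proof.
  intros Hc m n Hmn.
  assert (HH : forall p : nat, x m < x (m + 1 + Z.of_nat p)%Z).
  { induction p.
    - specialize (Hc (m + 1)%Z). replace (m + 1 - 1)%Z with m in Hc by lia.
      replace (m + 1 + Z.of_nat 0)%Z with (m + 1)%Z by lia. auto.
    - specialize (Hc (m + 1 + Z.of_nat (S p))%Z).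
      replace (m + 1 + Z.of_nat (S p) - 1)%Z with (m + 1 + Z.of_nat p)%Z in Hc by lia. lra. }
  specialize (HH (Z.to_nat (n - m - 1))).
  replace (m + 1 + Z.of_nat (Z.to_nat (n - m - 1)))%Z with n in HH by lia. auto.
Qed.

Lemma shift_eq F x k t : equilibrium_configuration F x ->
  equilibrium_configuration F (fun n => x (n + k)%Z - t).
Proof.
  intros [Hc He]. split.
  - intros n. specialize (Hc (n + k)%Z). replace (n - 1 + k)%Z with (n + k - 1)%Z by lia. lra.
  - intros n. destruct (He (n + k)%Z) as [L [H1 H2]]. exists L. split.
    + eapply isum_ext; [|exact H1]. intros j. unfold left_force. f_equal.
      replace (n - Z.of_nat (S j) + k)%Z with (n + k - Z.of_nat (S j))%Z by lia. ring.
    + eapply isum_ext; [|exact H2]. intros j. unfold right_force. f_equal.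
      replace (n + Z.of_nat (S j) + k)%Z with (n + k + Z.of_nat (S j))%Z by lia. ring.
Qed.

Lemma tail_eq x z N n : equilibrium_configuration inverse_square x ->
  equilibrium_configuration inverse_square z ->
  (forall m, (N <= m)%Z -> x m = z m) -> (N <= n)%Z ->
  exists S, infinite_sum (fun i => inverse_square (x n - x (N - 1 - Z.of_nat i)%Z)) S /\
            infinite_sum (fun i => inverse_square (x n - z (N - 1 - Z.of_nat i)%Z)) S.
Proof.
  intros [_ Hx] [_ Hz] Hxz Hn.
  destruct (Hx n) as [L1 [A1 B1]]. destruct (Hz n) as [L2 [A2 B2]].
  assert (E : L1 = L2).
  { apply (uniqueness_sum (right_force inverse_square x n)); auto.
    eapply isum_ext; [|exact B2]. intros j. unfold right_force.
    rewrite !Hxz by lia. auto. }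
  subst L2. set (p := Z.to_nat (n - N)).
  exists (L1 - pre (left_force inverse_square x n) p). split.
  - eapply isum_ext; [|exact (isum_shift _ _ p A1)]. intros i. cbv beta. unfold left_force.
    f_equal. f_equal. f_equal. unfold p. lia.
  - replace (pre (left_force inverse_square x n) p) with (pre (left_force inverse_square z n) p).
    + eapply isum_ext; [|exact (isum_shift _ _ p A2)]. intros i. cbv beta. unfold left_force.
      rewrite <- (Hxz n) by lia. f_equal. f_equal. f_equal. unfold p. lia.
    + apply pre_ext. intros i Hi. unfold left_force. rewrite !Hxz; auto; unfold p in Hi; lia.
Qed.

Lemma scale_helper u v t j : 0 < t -> u < v -> 0 <= j ->
  / (v + j * t - u) ^ 2 * t ^ 2 = / ((v - u) / t + j) ^ 2.
Proof.
  intros Ht Huv Hj.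
  assert (Hw : 0 < (v - u) / t) by (apply Rdiv_lt_0_compat; lra).
  replace (v + j * t - u) with (t * ((v - u) / t + j)) by (field; lra).
  field. split; [lra|]. assert (0 <= j * t) by (apply Rmult_le_pos; lra). lra.
Qed.

Lemma uniq x z N k t : equilibrium_configuration inverse_square x ->
  equilibrium_configuration inverse_square z -> (1 <= k)%Z -> 0 < t ->
  (forall n, (N <= n)%Z -> x (n + k)%Z = x n + t) ->
  (forall m, (N <= m)%Z -> x m = z m) -> forall n, x n = z n.
Proof.
  intros Ex Ez Hk Ht Hper Hxz.
  assert (Cx := config_lt x (proj1 Ex)). assert (Cz := config_lt z (proj1 Ez)).
  assert (Hj : forall j : nat, x (N + Z.of_nat j * k)%Z = x N + INR j * t).
  { induction j.
    - replace (N + Z.of_nat 0 * k)%Z with N by lia. change (INR 0) with 0. ring.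
    - rewrite S_INR. replace (N + Z.of_nat (S j) * k)%Z with (N + Z.of_nat j * k + k)%Z by lia.
      rewrite (Hper (N + Z.of_nat j * k)%Z) by lia. lra. }
  set (al := fun i : nat => (x N - x (N - 1 - Z.of_nat i)%Z) / t).
  set (be := fun i : nat => (x N - z (N - 1 - Z.of_nat i)%Z) / t).
  assert (G : good al be).
  { repeat split.
    - intros m. unfold al. apply Rdiv_lt_0_compat; auto. assert (x (N - 1 - Z.of_nat m)%Z < x N) by (apply Cx; lia). lra.
    - intros m. unfold al. unfold Rdiv. apply Rmult_lt_compat_r. apply Rinv_0_lt_compat; auto.
      assert (x (N - 1 - Z.of_nat (S m))%Z < x (N - 1 - Z.of_nat m)%Z) by (apply Cx; lia). lra.
    - intros m. unfold be. rewrite (Hxz N) by lia. apply Rdiv_lt_0_compat; auto.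
      assert (z (N - 1 - Z.of_nat m)%Z < z N) by (apply Cz; lia). lra.
    - intros m. unfold be. unfold Rdiv. apply Rmult_lt_compat_r. apply Rinv_0_lt_compat; auto.
      assert (z (N - 1 - Z.of_nat (S m))%Z < z (N - 1 - Z.of_nat m)%Z) by (apply Cz; lia). lra.
    - intros j. destruct (tail_eq x z N (N + Z.of_nat j * k)%Z Ex Ez Hxz ltac:(lia)) as [S [A B]].
      exists (S * t ^ 2). split.
      + eapply isum_ext; [|exact (isum_scal _ _ (t ^ 2) A)]. intros i. cbv beta.
        rewrite isq, Hj. unfold al.
        apply scale_helper; auto. apply Cx; lia. apply pos_INR.
      + eapply isum_ext; [|exact (isum_scal _ _ (t ^ 2) B)]. intros i. cbv beta.
        rewrite isq, Hj. unfold be.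
        apply scale_helper; auto. rewrite (Hxz N) by lia. apply Cz; lia. apply pos_INR. }
  assert (C := core al be G).
  intros n. destruct (Z_le_gt_dec N n) as [h|h]; [apply Hxz; auto|].
  specialize (C (Z.to_nat (N - 1 - n))). unfold al, be in C.
  replace (N - 1 - Z.of_nat (Z.to_nat (N - 1 - n)))%Z with n in C by lia.
  assert (HH : t * ((x N - x n) / t) = t * ((x N - z n) / t)) by (rewrite C; auto).
  field_simplify in HH; lra.
Qed.

Lemma inv_sq_le a b : 0 < a -> a <= b -> / b ^ 2 <= / a ^ 2.
Proof. intros. apply Rinv_le_contravar. apply pow_lt; lra. apply pow_incr; lra. Qed.

Lemma inv_sq_inj a b : 0 < a -> 0 < b -> / b ^ 2 = / a ^ 2 -> a = b.
Proof.
  intros Ha Hb E. destruct (Rtotal_order a b) as [h|[h|h]]; auto.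
  - assert (/ b ^ 2 < / a ^ 2).
    { apply Rinv_lt_contravar. apply Rmult_lt_0_compat; apply pow_lt; lra. simpl. nra. } lra.
  - assert (/ a ^ 2 < / b ^ 2).
    { apply Rinv_lt_contravar. apply Rmult_lt_0_compat; apply pow_lt; lra. simpl. nra. } lra.
Qed.

Lemma periodic_trivial x k t : equilibrium_configuration inverse_square x -> (1 <= k)%Z ->
  (forall n, x (n + k)%Z = x n + t) -> trivial_configuration x.
Proof.
  intros [Hc He] Hk Hp.
  assert (Cx := config_lt x Hc).
  set (g := fun n => x (n + 1)%Z - x n).
  assert (gk : forall n, g (n + k)%Z = g n).
  { intros n. unfold g. replace (n + k + 1)%Z with (n + 1 + k)%Z by lia. rewrite !Hp. ring. }
  assert (gnat : forall q : nat, forall m, g (m + k * Z.of_nat q)%Z = g m).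
  { induction q; intros m. f_equal; lia.
    replace (m + k * Z.of_nat (S q))%Z with (m + k * Z.of_nat q + k)%Z by lia. rewrite gk. auto. }
  assert (gZ : forall q m, g (m + k * q)%Z = g m).
  { intros q m. destruct (Z_le_gt_dec 0 q).
    - replace q with (Z.of_nat (Z.to_nat q)) by lia. auto.
    - rewrite <- (gnat (Z.to_nat (- q)) (m + k * q)%Z). f_equal. lia. }
  assert (Win : forall K : nat, exists r0 : nat, (r0 <= K)%nat /\
            forall r : nat, (r <= K)%nat -> g (Z.of_nat r) <= g (Z.of_nat r0)).
  { induction K.
    - exists 0%nat. split; auto. intros r Hr. replace r with 0%nat by lia. lra.
    - destruct IHK as [r0 [Hr0 Hm]].
      destruct (Rle_dec (g (Z.of_nat (S K))) (g (Z.of_nat r0))) as [hle|hle].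
      + exists r0. split; [lia|]. intros r Hr. destruct (Nat.eq_dec r (S K)); [subst; auto|]. apply Hm; lia.
      + exists (S K). split; [lia|]. intros r Hr. destruct (Nat.eq_dec r (S K)); [subst; lra|].
        specialize (Hm r ltac:(lia)). lra. }
  destruct (Win (Z.to_nat (k - 1))) as [r0 [Hr0 Hm]].
  set (n0 := Z.of_nat r0).
  assert (Gmax : forall n, g n <= g n0).
  { intros n. rewrite <- (gZ (- (n / k))%Z n).
    assert (0 <= n mod k < k)%Z by (apply Z.mod_pos_bound; lia).
    assert (n = k * (n / k) + n mod k)%Z by (apply Z.div_mod; lia).
    replace (n + k * - (n / k))%Z with (Z.of_nat (Z.to_nat (n mod k))) by lia.
    apply Hm. lia. }
  destruct (He n0) as [L0 [A0 B0]]. destruct (He (n0 + 1)%Z) as [L1 [A1 B1]].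
  assert (Lt : forall j, left_force inverse_square x (n0 + 1)%Z j <= left_force inverse_square x n0 j).
  { intros j. unfold left_force. rewrite !isq. apply inv_sq_le.
    - assert (x (n0 - Z.of_nat (S j))%Z < x n0) by (apply Cx; lia). lra.
    - assert (E : x (n0 + 1)%Z - x (n0 + 1 - Z.of_nat (S j))%Z =
                  x n0 - x (n0 - Z.of_nat (S j))%Z + g n0 - g (n0 - Z.of_nat (S j))%Z).
      { unfold g. replace (n0 - Z.of_nat (S j) + 1)%Z with (n0 + 1 - Z.of_nat (S j))%Z by lia. ring. }
      rewrite E. specialize (Gmax (n0 - Z.of_nat (S j))%Z). lra. }
  assert (Rt : forall j, right_force inverse_square x n0 j <= right_force inverse_square x (n0 + 1)%Z j).
  { intros j. unfold right_force. rewrite !isq. apply inv_sq_le.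
    - assert (x (n0 + 1)%Z < x (n0 + 1 + Z.of_nat (S j))%Z) by (apply Cx; lia). lra.
    - assert (E : x (n0 + 1 + Z.of_nat (S j))%Z - x (n0 + 1)%Z =
                  x (n0 + Z.of_nat (S j))%Z - x n0 + g (n0 + Z.of_nat (S j))%Z - g n0).
      { unfold g. replace (n0 + Z.of_nat (S j) + 1)%Z with (n0 + 1 + Z.of_nat (S j))%Z by lia. ring. }
      rewrite E. specialize (Gmax (n0 + Z.of_nat (S j))%Z). lra. }
  assert (I1 := isum_le _ _ _ _ Lt A1 A0). assert (I2 := isum_le _ _ _ _ Rt B0 B1).
  assert (L1 = L0) by lra. subst L1.
  assert (TE := isum_terms_eq _ _ _ Lt A1 A0).
  assert (Gl : forall j : nat, g (n0 - Z.of_nat (S j))%Z = g n0).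
  { intros j. specialize (TE j). unfold left_force in TE. rewrite !isq in TE.
    assert (x (n0 - Z.of_nat (S j))%Z < x n0) by (apply Cx; lia).
    assert (x (n0 + 1 - Z.of_nat (S j))%Z < x (n0 + 1)%Z) by (apply Cx; lia).
    apply inv_sq_inj in TE; try lra. unfold g.
    replace (n0 - Z.of_nat (S j) + 1)%Z with (n0 + 1 - Z.of_nat (S j))%Z by lia. lra. }
  exists (g n0). intros n. fold (g n).
  set (q := (Z.abs (n - n0) + 1)%Z).
  rewrite <- (gZ (- q)%Z n).
  replace (n + k * - q)%Z with (n0 - Z.of_nat (S (Z.to_nat (n0 - 1 - (n + k * - q)))))%Z.
  apply Gl.
  assert (k * q >= q)%Z by nia. lia.
Qed.

Lemma right_case x N k t : equilibrium_configuration inverse_square x -> (1 <= k)%Z -> 0 < t ->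
  (forall n, (N <= n)%Z -> x (n + k)%Z = x n + t) -> trivial_configuration x.
Proof.
  intros E Hk Ht Hp.
  set (z := fun n => x (n + k)%Z - t).
  assert (Ez : equilibrium_configuration inverse_square z) by (apply shift_eq; auto).
  assert (U := uniq x z N k t E Ez Hk Ht Hp ltac:(intros m Hm; unfold z; rewrite Hp; auto; ring)).
  apply (periodic_trivial x k t E Hk). intros n. rewrite (U n). unfold z. ring.
Qed.

Lemma reflect_eq x : equilibrium_configuration inverse_square x ->
  equilibrium_configuration inverse_square (fun n => - x (- n)%Z).
Proof.
  intros [Hc He]. split.
  - intros n. specialize (Hc (- n + 1)%Z). replace (- n + 1 - 1)%Z with (- n)%Z in Hc by lia.
    replace (- (n - 1))%Z with (- n + 1)%Z by lia. lra.
  - intros n. destruct (He (- n)%Z) as [L [H1 H2]]. exists L. split.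
    + eapply isum_ext; [|exact H2]. intros j. unfold left_force, right_force. f_equal.
      replace (- (n - Z.of_nat (S j)))%Z with (- n + Z.of_nat (S j))%Z by lia. ring.
    + eapply isum_ext; [|exact H1]. intros j. unfold left_force, right_force. f_equal.
      replace (- (n + Z.of_nat (S j)))%Z with (- n - Z.of_nat (S j))%Z by lia. ring.
Qed.
Theorem mainTheorem5 (x : Z -> R)
  (Heq : equilibrium_configuration inverse_square x)
  (Hud : uniformly_discrete x)
  (Htail : exists (N k : Z) (t : R), (1 <= k)%Z /\ 0 < t /\
     ((forall n : Z, (N <= n)%Z -> x (n + k)%Z = x n + t) \/
      (forall n : Z, (n <= N)%Z -> x (n + k)%Z = x n + t))) :
  trivial_configuration x.
Proof.
  destruct Htail as (N & k & t & Hk & Ht & [Hr|Hl]).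
  - apply (right_case x N k t); auto.
  - set (y := fun n => - x (- n)%Z).
    assert (Ey := reflect_eq x Heq).
    destruct (right_case y (- N - k)%Z k t Ey Hk Ht) as [d Hd].
    + intros n Hn. unfold y. specialize (Hl (- n - k)%Z ltac:(lia)).
      replace (- n - k + k)%Z with (- n)%Z in Hl by lia.
      replace (- (n + k))%Z with (- n - k)%Z by lia. lra.
    + exists d. intros n. specialize (Hd (- n - 1)%Z). unfold y in Hd.
      replace (- (- n - 1 + 1))%Z with n in Hd by lia.
      replace (- (- n - 1))%Z with (n + 1)%Z in Hd by lia. lra.
Qed.
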